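(* Suppose $\mathcal X_1,\dots,\mathcal X_n$ satisfy Condition (RIP) with $\delta\in(0,1/3)$. Fix $l\in\{1,\dots,L\}$ and let $\hat{\mathcal A}=\bigotimes_{k=L}^{l+1}\hat{\mathcal A}_k$, $\mathcal A=\bigotimes_{k=L}^{l+1}\mathcal A_k$ and $\hat{\mathcal G}=\bigotimes_{k=l-1}^{1}\hat{\mathcal G}_k$ with all factors in $\mathbb R^{d_k\times p_k\times q_k}$ and $\|\hat{\mathcal A}\|_F=\|\mathcal A\|_F=\|\hat{\mathcal G}\|_F=1$ (for $l=L$, resp. $l=1$, the corresponding product is the array $1$). Let $\hat{\mathbf x}_i=\mathrm{vec}(\tilde{\mathcal X}_i^{(l)}(\hat{\mathcal A},\hat{\mathcal G}))$, $\mathbf x_i=\mathrm{vec}(\tilde{\mathcal X}_i^{(l)}(\mathcal A,\hat{\mathcal G}))$, $\hat{\boldsymbol\Sigma}=\frac1n\sum_i\hat{\mathbf x}_i\hat{\mathbf x}_i^\top$ and $\boldsymbol\Sigma=\frac1n\sum_i\hat{\mathbf x}_i\mathbf x_i^\top$. Then $\hat{\boldsymbol\Sigma}$ is invertible and $$\big\|\hat{\boldsymbol\Sigma}^{-1}\big(\langle\hat{\mathcal A},\mathcal A\rangle\hat{\boldsymbol\Sigma}-\boldsymbol\Sigma\big)\big\|_2\le\frac{3\delta}{1-3\delta}\,\mathrm{dist}(\hat{\mathcal A},\mathcal A),$$ where $\|\cdot\|_2$ is the spectral norm.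
   Context: Arrays are real 3-way arrays; $\langle\cdot,\cdot\rangle$ and $\|\cdot\|_F$ are the entrywise inner product and norm. For $\mathcal A\in\mathbb R^{a_1\times a_2\times a_3}$, $\mathcal B\in\mathbb R^{b_1\times b_2\times b_3}$ the Kronecker product $\mathcal A\otimes\mathcal B\in\mathbb R^{a_1b_1\times a_2b_2\times a_3b_3}$ has entries $(\mathcal A\otimes\mathcal B)_{(h_1-1)b_1+h_2,\,(j_1-1)b_2+j_2,\,(k_1-1)b_3+k_2}=\mathcal A_{h_1j_1k_1}\mathcal B_{h_2j_2k_2}$; it is associative, $\bigotimes_{l=L}^1\mathcal B_l:=\mathcal B_L\otimes\cdots\otimes\mathcal B_1$, and the $1\times1\times1$ array $1$ is neutral. Fix $L\ge2$, positive integers $d_l,p_l,q_l$, $d=\prod_ld_l$, $p=\prod_lp_l$, $q=\prod_lq_l$; vec is a fixed vectorization. For nonzero arrays of the same shape, $\mathrm{dist}(\mathcal U,\mathcal V)=\big(1-\langle\mathcal U,\mathcal V\rangle^2/(\|\mathcal U\|_F^2\|\mathcal V\|_F^2)\big)^{1/2}$. Condition (RIP) with constant $\delta\in(0,1)$: for all arrays $\mathcal B_l^r\in\mathbb R^{d_l\times p_l\times q_l}$ ($l=1,\dots,L$, $r=1,2$), with $\mathcal S=\sum_{r=1}^2\bigotimes_{l=L}^1\mathcal B_l^r$, $(1-\delta)\|\mathcal S\|_F^2\le\frac1n\sum_{i=1}^n\langle\mathcal X_i,\mathcal S\rangle^2\le(1+\delta)\|\mathcal S\|_F^2$. For $l\in\{1,\dots,L\}$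 let $D_l^+=\prod_{k=l+1}^Ld_k$, $D_l^-=\prod_{k=1}^{l-1}d_k$, similarly $P_l^\pm,Q_l^\pm$ (empty products are 1); for $\mathcal A\in\mathbb R^{D_l^+\times P_l^+\times Q_l^+}$, $\mathcal G\in\mathbb R^{D_l^-\times P_l^-\times Q_l^-}$, $\tilde{\mathcal X}_i^{(l)}(\mathcal A,\mathcal G)\in\mathbb R^{d_l\times p_l\times q_l}$ is the unique array with $\langle\tilde{\mathcal X}_i^{(l)}(\mathcal A,\mathcal G),\mathcal B\rangle=\langle\mathcal X_i,\mathcal A\otimes\mathcal B\otimes\mathcal G\rangle$ for all $\mathcal B\in\mathbb R^{d_l\times p_l\times q_l}$. *)

(* Defs.v *)
From HB Require Import structures.
From mathcomp Require Import all_boot all_order all_algebra.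
From mathcomp Require Import boolp classical_sets reals.
Set Implicit Arguments. Unset Strict Implicit. Unset Printing Implicit Defensive.
Import Order.TTheory GRing.Theory Num.Theory.
Local Open Scope ring_scope.
Local Open Scope classical_set_scope.

Section Arrays.
Variable R : realType.

(* A real 3-way array, 0-based indices; only the entries inside the declared
   shape (a1,a2,a3) are ever read by the operations below. *)
Definition arr := nat -> nat -> nat -> R.

Definition ainner (a1 a2 a3 : nat) (A B : arr) : R :=
  \sum_(h < a1) \sum_(j < a2) \sum_(k < a3) A h j k * B h j k.

Definition afnorm (a1 a2 a3 : nat) (A : arr) : R := Num.sqrt (ainner a1 a2 a3 A A).

(* Kronecker product A (x) B where B has shape b1 x b2 x b3:
   (A (x) B)_{h1*b1+h2, j1*b2+j2, k1*b3+k2} = A_{h1 j1 k1} B_{h2 j2 k2} *)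
Definition akron (b1 b2 b3 : nat) (A B : arr) : arr := fun h j k =>
  A (h %/ b1)%N (j %/ b2)%N (k %/ b3)%N * B (h %% b1)%N (j %% b2)%N (k %% b3)%N.

Definition aone : arr := fun _ _ _ => 1.

Definition aadd (A B : arr) : arr := fun h j k => A h j k + B h j k.

Definition adelta (h0 j0 k0 : nat) : arr :=
  fun h j k => ((h == h0) && (j == j0) && (k == k0))%:R.

Fixpoint akprod (d p q : nat -> nat) (F : nat -> arr) (s : seq nat) : arr :=
  match s with
  | [::] => aone
  | k :: s' => akron (\prod_(m <- s') d m) (\prod_(m <- s') p m) (\prod_(m <- s') q m)
                     (F k) (akprod d p q F s')
  end.

Definition descseq (lo hi : nat) : seq nat := rev (iota lo (hi.+1 - lo)).

Definition adist (a1 a2 a3 : nat) (U V : arr) : R :=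
  Num.sqrt (1 - ainner a1 a2 a3 U V ^+ 2 / (ainner a1 a2 a3 U U * ainner a1 a2 a3 V V)).

(* Condition (RIP) with constant delta; X i (i < n) has shape d x p x q with
   d = prod_{l=1}^L d_l etc.  B r l is the factor B_l^r. *)
Definition RIP (L : nat) (d p q : nat -> nat) (n : nat) (X : nat -> arr) (delta : R) : Prop :=
  (0 < delta < 1) /\
  forall B : nat -> nat -> arr,
    let s := descseq 1 L in
    let D := (\prod_(m <- s) d m)%N in
    let P := (\prod_(m <- s) p m)%N in
    let Q := (\prod_(m <- s) q m)%N in
    let S := aadd (akprod d p q (B 1%N) s) (akprod d p q (B 2%N) s) in
    (1 - delta) * ainner D P Q S S
      <= n%:R^-1 * \sum_(i < n) ainner D P Q (X i) S ^+ 2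
      <= (1 + delta) * ainner D P Q S S.

(* Its (h,j,k) entry is <X, A (x) E_{hjk} (x) G>, i.e. it is the unique array
   with <tildeX, B> = <X, A (x) B (x) G> for all B. *)
Definition atilde (aA aB aC gA gB gC b1 b2 b3 : nat) (X A G : arr) : arr :=
  fun h j k =>
    ainner (aA * b1 * gA) (aB * b2 * gB) (aC * b3 * gC) X
      (akron (b1 * gA) (b2 * gB) (b3 * gC) A (akron gA gB gC (adelta h j k) G)).

Definition avec (a b c : nat) (X : arr) : 'cV[R]_(a * b * c) :=
  \col_(i < a * b * c) X (i %/ (b * c))%N ((i %/ c) %% b)%N (i %% c)%N.

Definition vnorm (N : nat) (v : 'cV[R]_N) : R := Num.sqrt (\sum_i v i 0 ^+ 2).

Definition specnorm (N : nat) (M : 'M[R]_N) : R :=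
  sup [set vnorm (M *m v) | v in [set v : 'cV[R]_N | vnorm v = 1]].

End Arrays.

(* Main.v *)
Require Import Defs.
From HB Require Import structures.
From mathcomp Require Import all_boot all_order all_algebra.
From mathcomp Require Import boolp classical_sets reals.
From mathcomp Require Import ring lra.
Import Order.TTheory GRing.Theory Num.Theory.
Set Implicit Arguments. Unset Strict Implicit. Unset Printing Implicit Defensive.
Local Open Scope ring_scope.
Local Open Scope classical_set_scope.

Section Aux.
Variable R : realType.
Implicit Types A B C U V W : arr R.

Lemma akronA b1 b2 b3 c1 c2 c3 A B C :
  akron (b1*c1) (b2*c2) (b3*c3) A (akron c1 c2 c3 B C) =
  akron c1 c2 c3 (akron b1 b2 b3 A B) C.
Proof.
apply/funext=> h; apply/funext=> j; apply/funext=> k; rewrite /akron.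
rewrite mulrA -!modn_divl ![(_ * c1)%N]mulnC ![(_ * c2)%N]mulnC ![(_ * c3)%N]mulnC.
rewrite !divnMA !modn_dvdm ?dvdn_mulr //.
Qed.

Lemma divmod_split i j b : (j < b)%N -> ((i*b+j) %/ b = i /\ (i*b+j) %% b = j)%N.
Proof.
move=> jb; have b0 : (0 < b)%N by apply: leq_ltn_trans jb.
by rewrite divnMDl // divn_small // addn0 modnMDl modn_small.
Qed.

Lemma sum_split (a b : nat) (F : nat -> R) :
  \sum_(i < a*b) F i = \sum_(i < a) \sum_(j < b) F (i*b+j)%N.
Proof.
elim: a => [|a IH]; first by rewrite mul0n !big_ord0.
rewrite big_ord_recr /= -IH mulSnr big_split_ord /=.
by congr (_ + _); apply: eq_bigr => j _.
Qed.

Definition alin (x : R) U (y : R) V : arr R := fun h j k => x * U h j k + y * V h j k.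

Lemma ainnerC a1 a2 a3 U V : ainner a1 a2 a3 U V = ainner a1 a2 a3 V U.
Proof.
rewrite /ainner; apply: eq_bigr => h _; apply: eq_bigr => j _; apply: eq_bigr => k _.
by rewrite mulrC.
Qed.

Lemma ainner_linl a1 a2 a3 x U y V W :
  ainner a1 a2 a3 (alin x U y V) W = x * ainner a1 a2 a3 U W + y * ainner a1 a2 a3 V W.
Proof.
rewrite /ainner !mulr_sumr -big_split; apply: eq_bigr => h _.
rewrite !mulr_sumr -big_split; apply: eq_bigr => j _.
rewrite !mulr_sumr -big_split; apply: eq_bigr => k _.
by rewrite /alin mulrDl !mulrA.
Qed.

Lemma ainner_linr a1 a2 a3 x U y V W :
  ainner a1 a2 a3 W (alin x U y V) = x * ainner a1 a2 a3 W U + y * ainner a1 a2 a3 W V.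
Proof. by rewrite ainnerC ainner_linl !(ainnerC _ _ _ W). Qed.

Lemma ainner_ge0 a1 a2 a3 U : 0 <= ainner a1 a2 a3 U U.
Proof.
rewrite /ainner; apply: sumr_ge0 => h _; apply: sumr_ge0 => j _; apply: sumr_ge0 => k _.
by rewrite -expr2 sqr_ge0.
Qed.

Lemma ainner_kron a1 a2 a3 b1 b2 b3 A B A' B' :
  ainner (a1*b1) (a2*b2) (a3*b3) (akron b1 b2 b3 A B) (akron b1 b2 b3 A' B') =
  ainner a1 a2 a3 A A' * ainner b1 b2 b3 B B'.
Proof.
rewrite /ainner.
set P := akron b1 b2 b3 A B; set P' := akron b1 b2 b3 A' B'.
rewrite (sum_split a1 b1 (fun h => \sum_(j < a2*b2) \sum_(k < a3*b3) P h j k * P' h j k)).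
under eq_bigr => h1 _ do under eq_bigr => h2 _ do
  rewrite (sum_split a2 b2 (fun j => \sum_(k < a3*b3) P (h1*b1+h2)%N j k * P' (h1*b1+h2)%N j k)).
under eq_bigr => h1 _ do under eq_bigr => h2 _ do under eq_bigr => j1 _ do
  under eq_bigr => j2 _ do
  rewrite (sum_split a3 b3 (fun k => P (h1*b1+h2)%N (j1*b2+j2)%N k * P' (h1*b1+h2)%N (j1*b2+j2)%N k)).
rewrite /P /P'.
rewrite mulr_suml; apply: eq_bigr => h1 _.
rewrite exchange_big /= mulr_suml; apply: eq_bigr => j1 _.
under eq_bigr => h2 _ do rewrite exchange_big /=.
rewrite exchange_big /= mulr_suml; apply: eq_bigr => k1 _.
rewrite mulr_sumr; apply: eq_bigr => h2 _.
rewrite mulr_sumr; apply: eq_bigr => j2 _.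
rewrite mulr_sumr; apply: eq_bigr => k2 _.
rewrite /akron.
have [-> ->] := @divmod_split h1 h2 b1 (ltn_ord h2).
have [-> ->] := @divmod_split j1 j2 b2 (ltn_ord j2).
have [-> ->] := @divmod_split k1 k2 b3 (ltn_ord k2).
ring.
Qed.


Definition box a1 a2 a3 U V := forall h j k, (h < a1)%N -> (j < a2)%N -> (k < a3)%N ->
  U h j k = V h j k.

Lemma ainner_box a1 a2 a3 U U' V V' : box a1 a2 a3 U U' -> box a1 a2 a3 V V' ->
  ainner a1 a2 a3 U V = ainner a1 a2 a3 U' V'.
Proof.
move=> HU HV; rewrite /ainner; apply: eq_bigr => h _; apply: eq_bigr => j _;
  apply: eq_bigr => k _.
by rewrite HU ?HV.
Qed.

Variables (d p q : nat -> nat).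
Notation Dp s := (\prod_(m <- s) d m)%N.
Notation Pp s := (\prod_(m <- s) p m)%N.
Notation Qp s := (\prod_(m <- s) q m)%N.

Lemma akprod_eq_in (F G : nat -> arr R) s : {in s, F =1 G} ->
  akprod d p q F s = akprod d p q G s.
Proof.
elim: s => [|k s IH] //= H.
rewrite H ?mem_head // IH // => x xs; apply: H; by rewrite in_cons xs orbT.
Qed.

Lemma akprod_cat_cons (F : nat -> arr R) k s1 s2 :
  akprod d p q F ((k :: s1) ++ s2) =
  akron (Dp s2) (Pp s2) (Qp s2) (akprod d p q F (k :: s1)) (akprod d p q F s2).
Proof.
elim: s1 k => [|k' s1 IH] k.
  rewrite /= !big_nil; congr akron.
  by apply/funext=> h; apply/funext=> j; apply/funext=> m; rewrite /akron !divn1 /aone mulr1.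
transitivity (akron (Dp ((k'::s1) ++ s2)) (Pp ((k'::s1) ++ s2)) (Qp ((k'::s1) ++ s2))
   (F k) (akprod d p q F ((k'::s1)++s2))); first by [].
rewrite IH !big_cat akronA //.
Qed.

Lemma akprod_cat_box (F : nat -> arr R) s1 s2 :
  box (Dp (s1 ++ s2)) (Pp (s1 ++ s2)) (Qp (s1 ++ s2)) (akprod d p q F (s1 ++ s2))
  (akron (Dp s2) (Pp s2) (Qp s2) (akprod d p q F s1) (akprod d p q F s2)).
Proof.
case: s1 => [|k s1] h j m hh jj mm; last by rewrite akprod_cat_cons.
by rewrite /= /akron /aone mul1r !modn_small.
Qed.

End Aux.

Lemma descseq_split L l : (1 <= l <= L)%N ->
  descseq 1 L = descseq l.+1 L ++ l :: descseq 1 l.-1.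
Proof.
case/andP=> l1 lL; rewrite /descseq.
have -> : (L.+1 - 1 = l.-1 + (1 + (L.+1 - l.+1)))%N.
  by rewrite subn1 /= subSS; case: l l1 lL => // l _ lL; rewrite /= addnA addn1 subnKC.
rewrite iotaD iotaD; case: l l1 lL => // l _ lL.
by rewrite !rev_cat /= add1n addn1 subn1 -catA.
Qed.

Section Vec.
Variable R : realType.
Variables (b1 b2 b3 : nat).
Hypotheses (b1p : (0 < b1)%N) (b2p : (0 < b2)%N) (b3p : (0 < b3)%N).
Notation N := (b1 * b2 * b3)%N.

Definition i1 (r : nat) := (r %/ (b2 * b3))%N.
Definition i2 (r : nat) := ((r %/ b3) %% b2)%N.
Definition i3 (r : nat) := (r %% b3)%N.

Lemma idx_rec r : r = (i1 r * (b2 * b3) + i2 r * b3 + i3 r)%N.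
Proof.
rewrite /i1 /i2 /i3 [(b2 * b3)%N]mulnC divnMA.
rewrite {1}(divn_eq r b3) {1}(divn_eq (r %/ b3) b2).
by rewrite mulnDl [(b3 * b2)%N]mulnC mulnA.
Qed.

Lemma idx_inj r s : i1 r = i1 s -> i2 r = i2 s -> i3 r = i3 s -> r = s.
Proof. by move=> e1 e2 e3; rewrite (idx_rec r) (idx_rec s) e1 e2 e3. Qed.

Lemma idx_box (r : 'I_N) : [/\ (i1 r < b1)%N, (i2 r < b2)%N & (i3 r < b3)%N].
Proof.
split; last by apply: ltn_pmod.
  by rewrite /i1 ltn_divLR ?muln_gt0 ?b2p // mulnA.
by apply: ltn_pmod.
Qed.

Lemma sum_ind (a x y : nat) : (x < a)%N ->
  \sum_(h < a) ((h == x :> nat)%:R * (h == y :> nat)%:R : R) = (x == y)%:R.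
Proof.
move=> xa; rewrite (bigD1 (Ordinal xa)) //= eqxx mul1r big1 ?addr0 // => h.
by rewrite -val_eqE /= => /negbTE ->; rewrite mul0r.
Qed.

Lemma ainner_delta x1 x2 x3 y1 y2 y3 : (x1 < b1)%N -> (x2 < b2)%N -> (x3 < b3)%N ->
  ainner b1 b2 b3 (adelta R x1 x2 x3) (adelta R y1 y2 y3) =
  ((x1 == y1) && (x2 == y2) && (x3 == y3))%:R.
Proof.
move=> h1 h2 h3; rewrite /ainner /adelta.
have E : forall (h j k : nat), (((h == x1) && (j == x2) && (k == x3))%:R *
   ((h == y1) && (j == y2) && (k == y3))%:R : R) =
   ((h == x1)%:R * (h == y1)%:R) * (((j == x2)%:R * (j == y2)%:R) *
   ((k == x3)%:R * (k == y3)%:R)).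
  by move=> h j k; rewrite -!mulnb !natrM; ring.
under eq_bigr => h _ do under eq_bigr => j _ do under eq_bigr => k _ do rewrite E.
under eq_bigr => h _ do under eq_bigr => j _ do rewrite -mulr_sumr -mulr_sumr.
under eq_bigr => h _ do rewrite -mulr_sumr -mulr_suml.
rewrite -mulr_suml !sum_ind // -!mulnb !natrM; ring.
Qed.

Lemma ainner_sumr a1 a2 a3 n (W : arr R) (c : 'I_n -> R) (Y : 'I_n -> arr R) :
  ainner a1 a2 a3 W (fun h j k => \sum_(r < n) c r * Y r h j k) =
  \sum_(r < n) c r * ainner a1 a2 a3 W (Y r).
Proof.
rewrite /ainner.
under eq_bigr => h _ do under eq_bigr => j _ do under eq_bigr => k _ do rewrite mulr_sumr.
under eq_bigr => h _ do under eq_bigr => j _ do rewrite exchange_big /=.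
under eq_bigr => h _ do rewrite exchange_big /=.
rewrite exchange_big /=; apply: eq_bigr => r _.
rewrite mulr_sumr; apply: eq_bigr => h _.
rewrite mulr_sumr; apply: eq_bigr => j _.
rewrite mulr_sumr; apply: eq_bigr => k _.
by rewrite mulrCA.
Qed.

Lemma ainner_suml a1 a2 a3 n (W : arr R) (c : 'I_n -> R) (Y : 'I_n -> arr R) :
  ainner a1 a2 a3 (fun h j k => \sum_(r < n) c r * Y r h j k) W =
  \sum_(r < n) c r * ainner a1 a2 a3 (Y r) W.
Proof.
rewrite ainnerC ainner_sumr; apply: eq_bigr => r _; by rewrite ainnerC.
Qed.

Definition dlt (r : nat) : arr R := adelta R (i1 r) (i2 r) (i3 r).

Definition Bu (u : 'cV[R]_N) : arr R := fun h j k => \sum_(r < N) u r 0 * dlt r h j k.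

Definition dotc (u v : 'cV[R]_N) := \sum_(r < N) u r 0 * v r 0.

Lemma ainner_Bu u v : ainner b1 b2 b3 (Bu u) (Bu v) = dotc u v.
Proof.
rewrite /Bu ainner_suml /dotc; apply: eq_bigr => r _.
rewrite ainner_sumr (bigD1 r) //= big1 ?addr0.
  have [? ? ?] := idx_box r.
  by rewrite /dlt ainner_delta // !eqxx mulr1.
move=> s /negbTE rs; have [? ? ?] := idx_box r.
rewrite /dlt ainner_delta //.
case: (boolP (_ && _ && _)); last by rewrite mulr0.
case/andP=> /andP[/eqP e1 /eqP e2] /eqP e3.
by move: rs; rewrite -val_eqE /= (@idx_inj r s e1 e2 e3) eqxx.
Qed.

End Vec.

Section TT.
Variable R : realType.
Variables (a1 a2 a3 m1 m2 m3 b1 b2 b3 : nat) (G : arr R).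
Hypotheses (b1p : (0 < b1)%N) (b2p : (0 < b2)%N) (b3p : (0 < b3)%N).
Notation N := (b1 * b2 * b3)%N.

Definition T (A U : arr R) := akron (b1 * m1) (b2 * m2) (b3 * m3) A (akron m1 m2 m3 U G).

Lemma T_ainner (A Aq U Uq : arr R) :
  ainner (a1*b1 * m1) (a2*b2 * m2) (a3*b3 * m3) (T A U) (T Aq Uq) =
  ainner a1 a2 a3 A Aq * (ainner b1 b2 b3 U Uq * ainner m1 m2 m3 G G).
Proof. by rewrite -!mulnA /T !ainner_kron. Qed.

Lemma T_linr A x U y V : T A (alin x U y V) = alin x (T A U) y (T A V).
Proof.
apply/funext=> h; apply/funext=> j; apply/funext=> k; rewrite /T /akron /alin; ring.
Qed.

Lemma dot_avec u X A :
  dotc u (avec b1 b2 b3 (atilde a1 a2 a3 m1 m2 m3 b1 b2 b3 X A G)) =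
  ainner (a1*b1 * m1) (a2*b2 * m2) (a3*b3 * m3) X (T A (Bu u)).
Proof.
have -> : T A (Bu u) = fun h j k => \sum_(r < N) u r 0 * T A (dlt R b2 b3 r) h j k.
  apply/funext=> h; apply/funext=> j; apply/funext=> k.
  rewrite /T /akron /Bu mulr_suml mulr_sumr; apply: eq_bigr => r _.
  ring.
rewrite (ainner_sumr _ _ _ X (fun r => u r 0) (fun r => T A (dlt R b2 b3 r))) /dotc; apply: eq_bigr => r _.
by rewrite mxE.
Qed.

Lemma qform n (a : R) (y z : 'I_n -> 'cV[R]_N) (u v : 'cV[R]_N) :
  (u^T *m (a *: \sum_(i < n) (y i *m (z i)^T)) *m v) 0 0 =
  a * \sum_(i < n) dotc u (y i) * dotc v (z i).
Proof.
rewrite -scalemxAr -scalemxAl mxE; congr (_ * _).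
rewrite mulmx_sumr mulmx_suml summxE; apply: eq_bigr => i _.
rewrite !mulmxA -(mulmxA _ (z i)^T) mxE big_ord1 /dotc !mxE.
congr (_ * _); apply: eq_bigr => r _; rewrite !mxE //; exact: mulrC.
Qed.

End TT.

Lemma real_final (R : realType) (delta r2 b2 e : R) :
  0 < delta -> delta < 1/3 -> 0 <= r2 -> 0 <= b2 ->
  (1 - delta) * r2 <= e ->
  (forall s, 0 < s -> 2 * s * e <= delta * (s ^+ 2 * r2 + b2)) ->
  Num.sqrt r2 <= 3 * delta / (1 - 3 * delta) * Num.sqrt b2.
Proof.
move=> d0 d3 r0 b0 lo up.
have k0 : 0 < 1 - 3 * delta by lra.
have K0 : 0 <= 3 * delta / (1 - 3 * delta) by apply: divr_ge0; lra.
set r := Num.sqrt r2; set b := Num.sqrt b2.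
have rr : r2 = r ^+ 2 by rewrite sqr_sqrtr.
have bb : b2 = b ^+ 2 by rewrite sqr_sqrtr.
have r0' : 0 <= r := sqrtr_ge0 _. have b0' : 0 <= b := sqrtr_ge0 _.
have [rz|rpos] := eqVneq r 0.
  by rewrite rz; apply: mulr_ge0.
have rp : 0 < r by rewrite lt0r rpos.
have [bz|bpos] := eqVneq b 0.
  have s0 : 0 < (1 - delta) / delta by apply: divr_gt0; lra.
  have := up _ s0; rewrite bb bz rr expr0n /= addr0 => H.
  have H2 : 2 * e <= (1 - delta) * r ^+ 2.
    have E : delta * (((1 - delta) / delta) ^+ 2 * r ^+ 2) =
             (1 - delta) / delta * ((1 - delta) * r ^+ 2).
      by field; rewrite gt_eqF.
    rewrite E in H.
    by move: H; set s := (1 - delta) / delta; rewrite [2 * s]mulrC -[s * 2 * e]mulrA (ler_pM2l s0).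
  have : 0 < r ^+ 2 by rewrite exprn_gt0.
  rewrite -rr in lo H2 *; nra.
have bp : 0 < b by rewrite lt0r bpos.
have s0 : 0 < b / r by apply: divr_gt0.
have := up _ s0; rewrite bb rr => H.
have E : delta * ((b / r) ^+ 2 * r ^+ 2 + b ^+ 2) = b / r * (2 * (delta * b * r)).
  by field; rewrite gt_eqF.
move: H; rewrite E; set s := b / r; rewrite -[2 * s * e]mulrA [2 * (s * e)]mulrCA (ler_pM2l s0) ler_pM2l // => H.
have H3 : (1 - delta) * r <= delta * b.
  rewrite rr in lo.
  have : (1 - delta) * r ^+ 2 <= delta * b * r by lra.
  by rewrite expr2 mulrA ler_pM2r.
have : r <= delta / (1 - delta) * b.
  by rewrite mulrAC ler_pdivlMr; [rewrite mulrC|lra].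
move=> H4; apply: le_trans H4 _; rewrite ler_pM2r //.
apply: ler_pM; [lra| rewrite invr_ge0; lra | lra | rewrite lef_pV2 ?posrE; lra].
Qed.
Theorem lemma4 (R : realType) (L : nat) (d p q : nat -> nat) (n : nat)
    (X : nat -> arr R) (delta : R) (l : nat) (Ahat A Ghat : nat -> arr R) :
  (2 <= L)%N ->
  (forall k, (1 <= k <= L)%N -> (0 < d k)%N /\ (0 < p k)%N /\ (0 < q k)%N) ->
  RIP L d p q n X delta ->
  0 < delta -> delta < 1 / 3 ->
  (1 <= l <= L)%N ->
  let sA := descseq l.+1 L in
  let sG := descseq 1 l.-1 in
  let Dp := (\prod_(m <- sA) d m)%N in
  let Pp := (\prod_(m <- sA) p m)%N in
  let Qp := (\prod_(m <- sA) q m)%N in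
  let Dm := (\prod_(m <- sG) d m)%N in
  let Pm := (\prod_(m <- sG) p m)%N in
  let Qm := (\prod_(m <- sG) q m)%N in
  let Ah := akprod d p q Ahat sA in
  let Aa := akprod d p q A sA in
  let Gh := akprod d p q Ghat sG in
  afnorm Dp Pp Qp Ah = 1 -> afnorm Dp Pp Qp Aa = 1 -> afnorm Dm Pm Qm Gh = 1 ->
  let xh i := avec (d l) (p l) (q l)
                (atilde Dp Pp Qp Dm Pm Qm (d l) (p l) (q l) (X i) Ah Gh) in
  let x i := avec (d l) (p l) (q l)
                (atilde Dp Pp Qp Dm Pm Qm (d l) (p l) (q l) (X i) Aa Gh) in
  let Sh := n%:R^-1 *: \sum_(i < n) (xh i *m (xh i)^T) in
  let S := n%:R^-1 *: \sum_(i < n) (xh i *m (x i)^T) in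
  Sh \in unitmx /\
  specnorm (invmx Sh *m (ainner Dp Pp Qp Ah Aa *: Sh - S))
    <= 3 * delta / (1 - 3 * delta) * adist Dp Pp Qp Ah Aa.
Proof.
move=> L2 dpos hrip d0 d3 hl sA sG Dp Pp Qp Dm Pm Qm Ah Aa Gh nAh nAa nGh xh x Sh S.
have [dl0 [pl0 ql0]] := dpos l hl.
have one_of : forall (a1 a2 a3 : nat) (Z : arr R), afnorm a1 a2 a3 Z = 1 -> ainner a1 a2 a3 Z Z = 1.
  move=> a1 a2 a3 Z; rewrite /afnorm => H.
  by rewrite -(sqr_sqrtr (ainner_ge0 a1 a2 a3 Z)) H expr1n.
have hAh := one_of _ _ _ _ nAh; have hAa := one_of _ _ _ _ nAa.
have hGh := one_of _ _ _ _ nGh.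
case: hrip => _ hrip.
set c := ainner Dp Pp Qp Ah Aa.
pose TT := T Dm Pm Qm (d l) (p l) (q l) Gh.
set FD := (Dp * d l * Dm)%N; set FP := (Pp * p l * Pm)%N; set FQ := (Qp * q l * Qm)%N.
have memA : forall k, k \in sA -> (l < k)%N.
  by move=> k; rewrite /sA /descseq mem_rev mem_iota => /andP[].
have memG : forall k, k \in sG -> (k < l)%N.
  move=> k; rewrite /sG /descseq mem_rev mem_iota => /andP[_].
  by case: (l) hl => // l' _; rewrite /= subn1 add1n.
pose Fm (Z : nat -> arr R) (W : arr R) k := if (l < k)%N then Z k else if k == l then W else Ghat k.
have boxF : forall Z W, box FD FP FQ (akprod d p q (Fm Z W) (sA ++ l :: sG))
    (TT (akprod d p q Z sA) W).
  move=> Z W h j k hh jj kk.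
  rewrite akprod_cat_box; last first.
  - by move: kk; rewrite /FQ big_cat big_cons /= mulnA.
  - by move: jj; rewrite /FP big_cat big_cons /= mulnA.
  - by move: hh; rewrite /FD big_cat big_cons /= mulnA.
  rewrite (@akprod_eq_in _ d p q (Fm Z W) Z); last by move=> m /memA lm; rewrite /Fm lm.
  rewrite /TT /T !big_cons /=.
  have -> : Fm Z W l = W by rewrite /Fm ltnn eqxx.
  rewrite (@akprod_eq_in _ d p q (Fm Z W) Ghat) //.
  move=> m /memG ml; rewrite /Fm ltnNge (ltnW ml) /=.
  by rewrite (ltn_eqF ml).
have ripT : forall U V : arr R,
  let S0 := alin 1 (TT Ah U) 1 (TT Aa V) in
  (1 - delta) * ainner FD FP FQ S0 S0 <=
  n%:R^-1 * \sum_(i < n) ainner FD FP FQ (X i) S0 ^+ 2 <= (1 + delta) * ainner FD FP FQ S0 S0.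
  move=> U V S0.
  have := hrip (fun r => if r == 1%N then Fm Ahat U else Fm A V).
  rewrite /= (descseq_split hl) -/sA -/sG.
  have bx : box FD FP FQ (aadd (akprod d p q (Fm Ahat U) (sA ++ l :: sG))
                               (akprod d p q (Fm A V) (sA ++ l :: sG))) S0.
    move=> h j k hh jj kk; rewrite /aadd /S0 /alin !mul1r.
    by rewrite boxF // boxF.
  have bX : forall i, box FD FP FQ (X i) (X i) by [].
  have -> : (\prod_(m <- sA ++ l :: sG) d m)%N = FD by rewrite big_cat big_cons /= mulnA.
  have -> : (\prod_(m <- sA ++ l :: sG) p m)%N = FP by rewrite big_cat big_cons /= mulnA.
  have -> : (\prod_(m <- sA ++ l :: sG) q m)%N = FQ by rewrite big_cat big_cons /= mulnA.
  rewrite (ainner_box bx bx).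
  by under eq_bigr => i _ do rewrite (ainner_box (bX i) bx).
have hdh : forall u (i : nat), dotc u (xh i) = ainner FD FP FQ (X i) (TT Ah (Bu u)).
  by move=> u i; rewrite /xh dot_avec.
have hda : forall u (i : nat), dotc u (x i) = ainner FD FP FQ (X i) (TT Aa (Bu u)).
  by move=> u i; rewrite /x dot_avec.
have hT : forall A1 A2 U V, ainner FD FP FQ (TT A1 U) (TT A2 V) =
    ainner Dp Pp Qp A1 A2 * ainner (d l) (p l) (q l) U V.
  by move=> A1 A2 U V; rewrite /TT T_ainner hGh mulr1.
have hB : forall u v : 'cV[R]_(d l * p l * q l), ainner (d l) (p l) (q l) (Bu u) (Bu v) = dotc u v.
  by move=> u v; rewrite ainner_Bu.
have lowq : forall u, (1 - delta) * dotc u u <= (u^T *m Sh *m u) 0 0.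
  move=> u; rewrite qform.
  have /andP[H _] := ripT (Bu u) (fun _ _ _ => 0).
  have E : alin 1 (TT Ah (Bu u)) 1 (TT Aa (fun _ _ _ => 0)) = TT Ah (Bu u).
    apply/funext=> h; apply/funext=> j; apply/funext=> k.
    rewrite /alin /TT /T /akron; ring.
  rewrite E hT hAh hB mul1r in H; apply: le_trans H _.
  apply: ler_wpM2l; first by rewrite invr_ge0 ler0n.
  under [X in _ <= X]eq_bigr => i _ do rewrite hdh -expr2.
  by [].
have dotc0 : forall u : 'cV[R]_(d l * p l * q l), dotc u u <= 0 -> u = 0.
  move=> u H.
  have H0 : dotc u u = 0.
    apply/le_anti; rewrite H /=; apply: sumr_ge0 => r _; by rewrite -expr2 sqr_ge0.
  apply/matrixP => r k; rewrite (ord1 k) mxE.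
  move: H0; rewrite /dotc => /psumr_eq0P H1.
  have nn : forall i : 'I_(d l * p l * q l), true -> 0 <= u i 0 * u i 0.
    by move=> i _; rewrite -expr2 sqr_ge0.
  by have := H1 nn r isT; rewrite -expr2 => /eqP; rewrite sqrf_eq0 => /eqP ->.
have unitS : Sh \in unitmx.
  rewrite unitmxE unitfE; apply/det0P => [[v vn0 vS]].
  have := lowq v^T; rewrite trmxK vS mul0mx mxE => H.
  have : dotc v^T v^T <= 0.
    by rewrite -(@ler_pM2l _ (1 - delta)) ?mulr0; lra.
  move/dotc0 => /(congr1 trmx); rewrite trmxK trmx0 => v0.
  by move: vn0; rewrite v0 eqxx.
split => //.
set M := c *: Sh - S.
set Kb := 3 * delta / (1 - 3 * delta) * adist Dp Pp Qp Ah Aa.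
have Kb0 : 0 <= Kb.
  apply: mulr_ge0; last exact: sqrtr_ge0.
  apply: divr_ge0; lra.
have main : forall v : 'cV[R]_(d l * p l * q l), vnorm v = 1 ->
    vnorm (invmx Sh *m M *m v) <= Kb.
  move=> v hv.
  set w := invmx Sh *m M *m v.
  have dvv : dotc v v = 1.
    have H0 : 0 <= \sum_i v i 0 ^+ 2 by apply: sumr_ge0 => i _; apply: sqr_ge0.
    move: hv; rewrite /vnorm => H.
    have := sqr_sqrtr H0; rewrite H expr1n => ->.
    by apply: eq_bigr => i _; rewrite expr2.
  have dww0 : 0 <= dotc w w by apply: sumr_ge0 => i _; rewrite -expr2 sqr_ge0.
  have hSw : Sh *m w = M *m v.
    by rewrite /w !mulmxA mulmxV // mul1mx.
  have eq1 : (w^T *m Sh *m w) 0 0 = (w^T *m M *m v) 0 0.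
    by rewrite -[in LHS]mulmxA hSw mulmxA.
  set S2 := alin c (TT Ah (Bu v)) (-1) (TT Aa (Bu v)).
  pose ai (i : 'I_n) := ainner FD FP FQ (X i) (TT Ah (Bu w)).
  pose bi (i : 'I_n) := ainner FD FP FQ (X i) S2.
  set e := n%:R^-1 * \sum_(i < n) ai i * bi i.
  have sub00 : forall A1 A2 : 'M[R]_1, (A1 - A2) 0 0 = A1 0 0 - A2 0 0.
    by move=> A1 A2; rewrite !mxE.
  have scl00 : forall (a : R) (A1 : 'M[R]_1), (a *: A1) 0 0 = a * A1 0 0.
    by move=> a A1; rewrite mxE.
  have eqR : (w^T *m M *m v) 0 0 = e.
    rewrite /M mulmxBr mulmxBl -scalemxAr -scalemxAl sub00 scl00 !qform.
    transitivity (n%:R^-1 * (c * \sum_(i < n) dotc w (xh i) * dotc v (xh i)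
                           - \sum_(i < n) dotc w (xh i) * dotc v (x i))); first ring.
    rewrite /e; congr (_ * _); rewrite mulr_sumr -sumrB; apply: eq_bigr => i _.
    rewrite /ai /bi /S2 ainner_linr !hdh hda; ring.
  have lo : (1 - delta) * dotc w w <= e by rewrite -eqR -eq1; apply: lowq.
  have N11 : ainner FD FP FQ (TT Ah (Bu w)) (TT Ah (Bu w)) = dotc w w.
    by rewrite hT hAh hB mul1r.
  have N12 : ainner FD FP FQ (TT Ah (Bu w)) S2 = 0.
    rewrite /S2 ainner_linr !hT hAh -/c; ring.
  have N22 : ainner FD FP FQ S2 S2 = 1 - c ^+ 2.
    rewrite /S2 ainner_linl !ainner_linr !hT hAh hAa (ainnerC _ _ _ Aa Ah) -/c !hB dvv; ring.
  have pol : forall s, 0 < s -> 2 * s * e <= delta * (s ^+ 2 * dotc w w + (1 - c ^+ 2)).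
    move=> s s0.
    have key : forall t : R, t ^+ 2 = 1 ->
      (1 - delta) * (s ^+ 2 * dotc w w + (1 - c ^+ 2)) <=
      n%:R^-1 * \sum_(i < n) (s * ai i + t * bi i) ^+ 2 <=
      (1 + delta) * (s ^+ 2 * dotc w w + (1 - c ^+ 2)).
      move=> t t2.
      have E : alin s (TT Ah (Bu w)) t S2 = alin 1 (TT Ah (alin s (Bu w) (t * c) (Bu v)))
                 1 (TT Aa (alin 0 (Bu v) (- t) (Bu v))).
        apply/funext=> h; apply/funext=> j; apply/funext=> k.
        rewrite /S2 /alin /TT /T /akron; ring.
      have := ripT (alin s (Bu w) (t * c) (Bu v)) (alin 0 (Bu v) (- t) (Bu v)).
      rewrite /= -E.
      have NS : ainner FD FP FQ (alin s (TT Ah (Bu w)) t S2) (alin s (TT Ah (Bu w)) t S2)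
                = s ^+ 2 * dotc w w + (1 - c ^+ 2).
        rewrite ainner_linl !(ainner_linr _ _ _ s) N11 N12 (ainnerC _ _ _ S2) N12 N22.
        transitivity (s ^+ 2 * dotc w w + t ^+ 2 * (1 - c ^+ 2)); first ring.
        by rewrite t2 mul1r.
      rewrite NS.
      by under eq_bigr => i _ do rewrite ainner_linr.
    have /andP[_ Hp] := key 1 (expr1n _ _).
    have t2m : (-1 : R) ^+ 2 = 1 by rewrite sqrrN expr1n.
    have /andP[Hm _] := key (-1) t2m.
    have D : \sum_(i < n) (s * ai i + 1 * bi i) ^+ 2 - \sum_(i < n) (s * ai i + (-1) * bi i) ^+ 2
             = 4 * s * \sum_(i < n) ai i * bi i.
      by rewrite -sumrB mulr_sumr; apply: eq_bigr => i _; ring.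
    move: Hp Hm D.
    set P1 := \sum_(i < n) _; set P2 := \sum_(i < n) _.
    move=> Hp Hm D.
    have E4 : n%:R^-1 * P1 - n%:R^-1 * P2 = 4 * s * e by rewrite -mulrBr D /e; ring.
    set m := s ^+ 2 * dotc w w + (1 - c ^+ 2) in Hp Hm *.
    nra.
  have b0 : 0 <= 1 - c ^+ 2 by rewrite -N22 ainner_ge0.
  have := real_final d0 d3 dww0 b0 lo pol.
  have -> : vnorm w = Num.sqrt (dotc w w).
    by rewrite /vnorm; congr Num.sqrt; apply: eq_bigr => i _; rewrite expr2.
  by rewrite /Kb /adist hAh hAa mulr1 divr1 -/c.
rewrite /specnorm.
case: (pselect (exists v : 'cV[R]_(d l * p l * q l), vnorm v = 1)) => [[v0 hv0]|nex].
  apply: ge_sup.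
    by exists (vnorm (invmx Sh *m M *m v0)); exists v0.
  by move=> y [v hv <-]; apply: main.
have -> : [set vnorm (invmx Sh *m M *m v) | v in [set v : 'cV[R]_(d l * p l * q l) | vnorm v = 1]] = set0.
  by apply/seteqP; split=> // y [v hv _]; exfalso; apply: nex; exists v.
by rewrite sup0.
Qed.
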